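(* Let $n\geq 2$, and let $0<x_1<\cdots<x_n$ and $0<y_1<\cdots<y_n$ be real numbers. Let $S=[1+x_iy_j]_{i,j=1}^n$. For $2\leq i\leq n$ let \[ \alpha_i=\frac{1+y_1x_i}{1+y_1x_{i-1}},\qquad \alpha_i'=\frac{1+x_1y_i}{1+x_1y_{i-1}}, \] and for $3\leq j\leq n$ let \[ \beta_j=\frac{(x_j-x_{j-1})(1+y_1x_{j-2})}{(x_{j-1}-x_{j-2})(1+y_1x_{j-1})},\qquad \beta_j'=\frac{(y_j-y_{j-1})(1+x_1y_{j-2})}{(y_{j-1}-y_{j-2})(1+x_1y_{j-1})}. \] Let $D$ be the $n\times n$ diagonal matrix with $D_{11}=1+x_1y_1$, $D_{22}=\dfrac{(x_2-x_1)(y_2-y_1)}{1+x_1y_1}$, and $D_{kk}=0$ for $3\leq k\leq n$. Then \[ S=\big(L_n(\alpha_n)\cdots L_2(\alpha_2)\big)\big(L_n(\beta_n)\cdots L_3(\beta_3)\big)\,D\,\big(U_3(\beta_3')\cdots U_n(\beta_n')\big)\big(U_2(\alpha_2')\cdots U_n(\alpha_n')\big). \]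
   Context: For a real number $s$ and $2\leq i\leq n$, $L_i(s)$ denotes the $n\times n$ matrix with all diagonal entries equal to $1$, $(i,i-1)$ entry equal to $s$, and all other entries zero; $U_i(s)$ denotes the $n\times n$ matrix with all diagonal entries equal to $1$, $(i-1,i)$ entry equal to $s$, and all other entries zero (elementary bidiagonal matrices). Empty products (e.g. when $n=2$) are the identity matrix. *)

(* Defs.v *)
(* Indices follow the paper (1-based) for the parameters
   L_i, U_i, x_i, y_i; matrix rows/columns are 'I_n (0-based). *)
From HB Require Import structures.
From mathcomp Require Import all_boot all_order all_algebra.
Set Implicit Arguments. Unset Strict Implicit. Unset Printing Implicit Defensive.
Import Order.TTheory GRing.Theory Num.Theory.
Local Open Scope ring_scope.

(* L_i(s): identity with entry s at paper position (i, i-1),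
   i.e. 0-based row i-1, column i-2. *)
Definition Lmx (R : pzRingType) (n i : nat) (s : R) : 'M[R]_n :=
  \matrix_(a < n, b < n)
    ((a == b)%:R + (if ((a : nat) == i.-1) && ((b : nat) == i.-2) then s else 0)).

(* U_i(s): identity with entry s at paper position (i-1, i). *)
Definition Umx (R : pzRingType) (n i : nat) (s : R) : 'M[R]_n :=
  \matrix_(a < n, b < n)
    ((a == b)%:R + (if ((a : nat) == i.-2) && ((b : nat) == i.-1) then s else 0)).

Definition mxprod (R : pzRingType) (n : nat) (s : seq nat) (F : nat -> 'M[R]_n)
  : 'M[R]_n := \big[@mulmx R n n n/1%:M]_(i <- s) F i.

Definition Smx (R : pzRingType) (n : nat) (x y : nat -> R) : 'M[R]_n :=
  \matrix_(i < n, j < n) (1 + x i.+1 * y j.+1).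

Definition alpha (R : fieldType) (x y : nat -> R) (i : nat) : R :=
  (1 + y 1%N * x i) / (1 + y 1%N * x i.-1).

Definition beta (R : fieldType) (x y : nat -> R) (j : nat) : R :=
  ((x j - x j.-1) * (1 + y 1%N * x j.-2)) /
  ((x j.-1 - x j.-2) * (1 + y 1%N * x j.-1)).

Definition Dmx (R : fieldType) (n : nat) (x y : nat -> R) : 'M[R]_n :=
  \matrix_(a < n, b < n)
    (if a == b then
       (if (a : nat) == 0%N then 1 + x 1%N * y 1%N
        else if (a : nat) == 1%N then
          (x 2%N - x 1%N) * (y 2%N - y 1%N) / (1 + x 1%N * y 1%N)
        else 0)
     else 0).

(* Main.v *)
Require Import Defs.
From mathcomp Require Import all_boot all_order all_algebra.
From mathcomp Require Import ring zify.
Import Order.TTheory GRing.Theory Num.Theory.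
Local Open Scope ring_scope.

Lemma L_off (R: pzRingType) n i s (v : 'cV[R]_n) (a : 'I_n) :
  (a:nat) != i.-1 -> (Lmx n i s *m v) a 0 = v a 0.
Proof.
move=> ha; rewrite mxE (bigD1 a) //= big1 => [|j /negbTE ja].
  by rewrite /Lmx !mxE eqxx (negbTE ha) /= !addr0 mul1r.
by rewrite /Lmx !mxE (negbTE ha) /= addr0 eq_sym ja mul0r.
Qed.

Lemma L_on (R: pzRingType) n i s (v : 'cV[R]_n) (a b : 'I_n) :
  (2 <= i)%N -> (a:nat) = i.-1 -> (b : nat) = i.-2 ->
  (Lmx n i s *m v) a 0 = v a 0 + s * v b 0.
Proof.
move=> hi ha hb.
have ab : a != b.
  apply/eqP => /(congr1 val) /=; rewrite ha hb; case: (i) hi => [|[|i']] //= _.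
  lia.
rewrite mxE (bigD1 a) //= (bigD1 b) /=; last by rewrite eq_sym.
rewrite big1 => [|j /andP [ja jb]].
  rewrite /Lmx !mxE eqxx ha eqxx /= hb (negbTE ab).
  have -> : (i.-1 == i.-2) = false.
    by apply/negbTE; case: (i) hi => [|[|i']] //= _; lia.
  by rewrite eqxx /= mulr0n !addr0 add0r mul1r.
rewrite /Lmx !mxE eq_sym (negbTE ja) /= add0r ha eqxx /=.
have -> : ((j : nat) == i.-2) = false by apply/negbTE; apply: contra jb => /eqP e; apply/eqP/val_inj; rewrite /= e hb.
by rewrite mul0r.
Qed.

Lemma mxprod_nil (R : pzRingType) n F : @mxprod R n [::] F = 1%:M.
Proof. by rewrite /mxprod big_nil. Qed.

Lemma mxprod_cons (R : pzRingType) n a s F :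
  @mxprod R n (a :: s) F = F a *m mxprod s F.
Proof. by rewrite /mxprod big_cons. Qed.

Lemma mxprod_cat (R : pzRingType) n s t F :
  @mxprod R n (s ++ t) F = mxprod s F *m mxprod t F.
Proof.
elim: s => [|a s IH] /=; first by rewrite mxprod_nil mul1mx.
by rewrite !mxprod_cons IH mulmxA.
Qed.

Lemma mxprod_tr (R : comPzRingType) n s F :
  (@mxprod R n s F)^T = mxprod (rev s) (fun i => (F i)^T).
Proof.
elim: s => [|a s IH] /=; first by rewrite !mxprod_nil trmx1.
rewrite mxprod_cons trmx_mul IH rev_cons -cats1 mxprod_cat.
by rewrite [in RHS]mxprod_cons mxprod_nil mulmx1.
Qed.

Lemma Umx_tr (R : pzRingType) n i s : (Umx n i s)^T = Lmx (R:=R) n i s.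
Proof. by apply/matrixP => a b; rewrite /Umx /Lmx !mxE [b == a]eq_sym andbC. Qed.

Lemma Lprod_char (R : pzRingType) n k m (c : nat -> R) (w : 'cV[R]_n) :
  (2 <= k)%N ->
  (forall a : 'I_n, ~~ ((k.-1 <= a) && (a < k.-1 + m))%N ->
     (mxprod (rev (iota k m)) (fun i => Lmx n i (c i)) *m w) a 0 = w a 0) /\
  (forall a b : 'I_n, b.+1 = a -> (k.-1 <= a < k.-1 + m)%N ->
     (mxprod (rev (iota k m)) (fun i => Lmx n i (c i)) *m w) a 0 =
       w a 0 + c a.+1 * (mxprod (rev (iota k m)) (fun i => Lmx n i (c i)) *m w) b 0).
Proof.
case: k => [|[|k]] // _ /=.
elim: m => [|m [IH1 IH2]].
  rewrite mxprod_nil mul1mx; split => // a b _; lia.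
have E : mxprod (rev (iota k.+2 m.+1)) (fun i => Lmx n i (c i)) =
   Lmx n (k.+2+m) (c (k.+2+m)) *m mxprod (rev (iota k.+2 m)) (fun i => Lmx n i (c i)).
  by rewrite -[m.+1]addn1 iotaD rev_cat /= mxprod_cons.
rewrite E -!mulmxA.
split.
  move=> a ha; rewrite L_off; last by rewrite ?addSn /=; lia.
  by apply: IH1; lia.
move=> a b hab ha.
rewrite [in RHS]L_off; last by rewrite ?addSn /=; lia.
case: (a == k.+1 + m :> nat) /eqP => e.
  rewrite (@L_on _ _ _ _ _ _ b); try (rewrite ?addSn /=; lia).
  rewrite IH1; last by lia.
  by rewrite e.
rewrite L_off; last by rewrite ?addSn /=; lia.
by apply: IH2 => //; lia.
Qed.

Lemma rec_sol (R : pzRingType) n k m c (w : 'cV[R]_n) (f : nat -> R) :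
  (2 <= k)%N -> (n <= k.-1 + m)%N ->
  (forall a : 'I_n, (a < k.-1)%N -> f a = w a 0) ->
  (forall a : 'I_n, (k.-1 <= a)%N -> f a = w a 0 + c a.+1 * f a.-1) ->
  forall a : 'I_n, (mxprod (rev (iota k m)) (fun i => Lmx n i (c i)) *m w) a 0 = f a.
Proof.
move=> hk hn h1 h2 [a Ha]; have [C1 C2] := @Lprod_char R n k m c w hk.
case: k hk hn h1 h2 C1 C2 => [|[|k]] // _ /= hn h1 h2 C1 C2.
elim: a Ha => [|a IH] Ha.
  by rewrite (C1 (Ordinal Ha)) //; apply/esym/(h1 (Ordinal Ha)).
case: (ltnP a.+1 k.+1) => h.
  rewrite (C1 (Ordinal Ha)) /=; last lia.
  by apply/esym/(h1 (Ordinal Ha)).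
rewrite (C2 (Ordinal Ha) (Ordinal (ltnW Ha))) //=; last lia.
by rewrite IH (h2 (Ordinal Ha)).
Qed.

Lemma entry_col (R : pzRingType) n (M : 'M[R]_n) a j : M a j = (M *m delta_mx j (0 : 'I_1)) a 0.
Proof. by rewrite -colE mxE. Qed.

Lemma key (R : realFieldType) (n : nat) (x y : nat -> R) :
  (forall i, (1 <= i <= n.+2)%N -> 0 < x i) ->
  (forall i, (2 <= i <= n.+2)%N -> x i.-1 < x i) ->
  0 < y 1%N ->
  forall a : 'I_n.+2,
   (mxprod (rev (iota 2 n.+1)) (fun i => Lmx n.+2 i (alpha x y i)) *m
    mxprod (rev (iota 3 n)) (fun j => Lmx n.+2 j (beta x y j))) a ord0
     = (1 + y 1%N * x a.+1) / (1 + y 1%N * x 1%N) /\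
   (mxprod (rev (iota 2 n.+1)) (fun i => Lmx n.+2 i (alpha x y i)) *m
    mxprod (rev (iota 3 n)) (fun j => Lmx n.+2 j (beta x y j))) a (@Ordinal n.+2 1 isT)
     = (x a.+1 - x 1%N) / (x 2%N - x 1%N).
Proof.
move=> hx hinc hy.
have nz1 : forall i, (1 <= i <= n.+2)%N -> 1 + y 1%N * x i != 0.
  move=> i hi; apply: lt0r_neq0; apply: addr_gt0 => //; exact: mulr_gt0 (hx i hi).
have nz2 : forall i, (2 <= i <= n.+2)%N -> x i - x i.-1 != 0.
  by move=> i hi; rewrite subr_eq0 gt_eqF // hinc.
move=> a.
rewrite !(@entry_col _ _ (_ *m _)) -!mulmxA.
set P := mxprod (rev (iota 2 n.+1)) _.
set Q := mxprod (rev (iota 3 n)) _.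
have Q0 : forall b : 'I_n.+2, (Q *m delta_mx ord0 (0:'I_1)) b 0 = ((b : nat) == 0%N)%:R.
  apply: (@rec_sol R n.+2 3 n (beta x y) _ (fun b => (b == 0%N)%:R)) => //=.
    by move=> b hb; rewrite mxE /= andbT.
  by move=> [[|[|b]] hb] //= _; rewrite mxE /= mulr0 addr0.
have P0 : forall b : 'I_n.+2, (P *m (Q *m delta_mx ord0 (0:'I_1))) b 0 =
    (1 + y 1%N * x b.+1) / (1 + y 1%N * x 1%N).
  apply: (@rec_sol R n.+2 2 n.+1 (alpha x y) _
     (fun b => (1 + y 1%N * x b.+1) / (1 + y 1%N * x 1%N))) => //=.
    by move=> [[|b] hb] //= _; rewrite Q0 /= divff // nz1.
  move=> [[|b] hb] //= _; rewrite Q0 /= add0r /alpha /=.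
  by field; rewrite !nz1 //; lia.
have Q1 : forall b : 'I_n.+2, (Q *m delta_mx (@Ordinal n.+2 1 isT) (0:'I_1)) b 0 =
    if (b == 0%N :> nat) then 0 else
    (x b.+1 - x b) * (1 + y 1%N * x 1%N) / ((x 2%N - x 1%N) * (1 + y 1%N * x b)).
  apply: (@rec_sol R n.+2 3 n (beta x y) _ (fun b =>
    if (b == 0%N :> nat) then 0 else
    (x b.+1 - x b) * (1 + y 1%N * x 1%N) / ((x 2%N - x 1%N) * (1 + y 1%N * x b)))) => //=.
    move=> [[|[|b]] hb] //= _; rewrite mxE //=.
    by field; rewrite nz1 //= (nz2 2%N).
  move=> [[|[|b]] hb] //= _; rewrite mxE /= add0r /beta /=.
  by field; rewrite !nz1 ?(nz2 2%N) ?(nz2 b.+2) //=; lia.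
have P1 : forall b : 'I_n.+2, (P *m (Q *m delta_mx (@Ordinal n.+2 1 isT) (0:'I_1))) b 0 =
    (x b.+1 - x 1%N) / (x 2%N - x 1%N).
  apply: (@rec_sol R n.+2 2 n.+1 (alpha x y) _
     (fun b => (x b.+1 - x 1%N) / (x 2%N - x 1%N))) => //=.
    by move=> [[|b] hb] //= _; rewrite Q1 /= subrr mul0r.
  move=> [[|b] hb] //= _; rewrite Q1 /= /alpha /=.
  by field; rewrite !nz1 ?(nz2 2%N) //=; lia.
by split; [apply: P0 | apply: P1].
Qed.

Lemma mxprod_trU (R : comPzRingType) n s c :
  (mxprod s (fun i => Umx n i (c i)))^T = mxprod (rev s) (fun i => Lmx (R:=R) n i (c i)).
Proof. by rewrite mxprod_tr /mxprod; apply: eq_bigr => i _; rewrite Umx_tr. Qed.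

Lemma Dmul (R : fieldType) n x y (M : 'M[R]_n) k j :
  (Dmx n x y *m M) k j = Dmx n x y k k * M k j.
Proof.
rewrite mxE (bigD1 k) //= big1 ?addr0 // => l lk.
have /negbTE kl : k != l by rewrite eq_sym.
by rewrite /Dmx mxE kl mul0r.
Qed.

Lemma tr_entry (R : Type) m n (M : 'M[R]_(m, n)) a b : M^T a b = M b a.
Proof. by rewrite mxE. Qed.

Theorem theorem2p2 (R : realFieldType) (n : nat) (x y : nat -> R) :
  (2 <= n)%N ->
  0 < x 1%N -> (forall i : nat, (1 <= i)%N -> (i < n)%N -> x i < x i.+1) ->
  0 < y 1%N -> (forall i : nat, (1 <= i)%N -> (i < n)%N -> y i < y i.+1) ->
  Smx n x y =
    mxprod (rev (iota 2 n.-1)) (fun i => Lmx n i (alpha x y i)) *m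
    mxprod (rev (iota 3 n.-2)) (fun j => Lmx n j (beta x y j)) *m
    Dmx n x y *m
    mxprod (iota 3 n.-2) (fun j => Umx n j (beta y x j)) *m
    mxprod (iota 2 n.-1) (fun i => Umx n i (alpha y x i)).
Proof.
case: n => [|[|n]] // _ hx1 hx hy1 hy.
rewrite -[n.+2.-1]/(n.+1) -[n.+2.-2]/n.
have pos : forall (z : nat -> R), 0 < z 1%N ->
    (forall i, (1 <= i)%N -> (i < n.+2)%N -> z i < z i.+1) ->
    forall i, (1 <= i <= n.+2)%N -> 0 < z i.
  move=> z z1 zi; elim=> [|i IH] //= hi; case: i IH hi => [|i] IH hi //.
  by apply: lt_trans (IH _) (zi _ _ _); lia.
have inc : forall (z : nat -> R),
    (forall i, (1 <= i)%N -> (i < n.+2)%N -> z i < z i.+1) ->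
    forall i, (2 <= i <= n.+2)%N -> z i.-1 < z i.
  by move=> z zi [|[|i]] //= hi; apply: zi; lia.
have Kx := @key R n x y (pos _ hx1 hx) (inc _ hx) hy1.
have Ky := @key R n y x (pos _ hy1 hy) (inc _ hy) hx1.
have nzx := lt0r_neq0 (addr_gt0 ltr01 (mulr_gt0 hx1 hy1)).
have nzy := lt0r_neq0 (addr_gt0 ltr01 (mulr_gt0 hy1 hx1)).
have dx : x 2%N - x 1%N != 0 by rewrite subr_eq0 gt_eqF // hx.
have dy : y 2%N - y 1%N != 0 by rewrite subr_eq0 gt_eqF // hy.
apply/matrixP => i j.
rewrite -!mulmxA mulmxA -[_ *m mxprod (iota 2 _) _]trmxK trmx_mul !mxprod_trU.
rewrite [in RHS]mxE (bigD1 ord0) // (bigD1 (@Ordinal n.+2 1 isT)) // big1.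
  rewrite !Dmul !tr_entry (proj1 (Kx i)) (proj2 (Kx i)) (proj1 (Ky j)) (proj2 (Ky j)).
  rewrite /Dmx /Smx !mxE /=.
  by field; rewrite ?nzx ?nzy ?dx ?dy.
move=> k /andP [/andP [_ k0] k1].
have /negbTE e0 : (k : nat) != 0%N by [].
have /negbTE e1 : (k : nat) != 1%N by [].
by rewrite Dmul /Dmx [in X in _ * X]mxE eqxx e0 e1 mul0r mulr0.
Qed.
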